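(* Let $\mathscr H$ be a complex Hilbert space and $\mathbf{X},\mathbf{Y},\mathbf{Z},\mathbf{W}\in\mathbb{B}(\mathscr H)^d$. Then $$w_e\left(\begin{bmatrix}\mathbf{X}&\mathbf{Y}\\\mathbf{Z}&\mathbf{W}\end{bmatrix}\right)\le w\left(\begin{bmatrix}w_e(\mathbf{X})&\|\mathbf{Y}\|\\\|\mathbf{Z}\|&w_e(\mathbf{W})\end{bmatrix}\right),$$ where on the right $w$ is the numerical radius of a $2\times2$ complex matrix.
   Context: $\mathbb{B}(\mathscr H)$ denotes the bounded linear operators on $\mathscr H$. For $\mathbf{T}=(T_1,\dots,T_d)$: $w_e(\mathbf{T})=\sup\{(\sum_{k}|\langle T_kx,x\rangle|^2)^{1/2}: \|x\|=1\}$ and $\|\mathbf{T}\|=\sup\{(\sum_k\|T_kx\|^2)^{1/2}: \|x\|=1\}$. For a matrix $A$, $w(A)=\sup\{|\langle Av,v\rangle|:\|v\|=1\}$. For $d$-tuples $\mathbf{X},\mathbf{Y},\mathbf{Z},\mathbf{W}$, $\begin{bmatrix}\mathbf{X}&\mathbf{Y}\\\mathbf{Z}&\mathbf{W}\end{bmatrix}$ denotes the $d$-tuple $\left(\begin{bmatrix}X_k&Y_k\\Z_k&W_k\end{bmatrix}\right)_{k=1}^d$ of operators on $\mathscr H\oplus\mathscr H$. *)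

(* Defs.v *)
From mathcomp Require Import all_boot all_order all_algebra.
From mathcomp Require Import boolp classical_sets reals.
From mathcomp.real_closed Require Export complex.
Set Implicit Arguments. Unset Strict Implicit. Unset Printing Implicit Defensive.
Import GRing.Theory Num.Theory.
Local Open Scope ring_scope.
Local Open Scope classical_set_scope.

Definition cmod2 (R : rcfType) (z : R[i]) : R := complex.Re z ^+ 2 + complex.Im z ^+ 2.
Definition cmod (R : rcfType) (z : R[i]) : R := Num.sqrt (cmod2 z).
Definition cconj (R : rcfType) (z : R[i]) : R[i] := Complex (complex.Re z) (- complex.Im z).

Record hilbert (R : realType) (H : lmodType R[i]) := Hilbert {
  ip : H -> H -> R[i];
  ip_linear : forall (a : R[i]) (x y z : H), ip (a *: x + y) z = a * ip x z + ip y z;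
  ip_conj : forall x y : H, ip y x = cconj (ip x y);
  ip_pos : forall x : H, 0 <= complex.Re (ip x x);
  ip_def : forall x : H, ip x x = 0 -> x = 0;
  ip_complete : forall u : nat -> H,
    (forall e : R, 0 < e -> exists N, forall m n, (N <= m)%N -> (N <= n)%N ->
        Num.sqrt (complex.Re (ip (u m - u n) (u m - u n))) < e) ->
    exists l : H, forall e : R, 0 < e -> exists N, forall n, (N <= n)%N ->
        Num.sqrt (complex.Re (ip (u n - l) (u n - l))) < e
}.

Section Ops.
Variables (R : realType) (H : lmodType R[i]) (hs : hilbert H).
Local Notation ip := (ip hs).

Definition hnorm (x : H) : R := Num.sqrt (complex.Re (ip x x)).

Definition bounded_op (T : H -> H) : Prop :=
  (forall (a : R[i]) (x y : H), T (a *: x + y) = a *: T x + T y) /\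
  exists M : R, forall x, hnorm (T x) <= M * hnorm x.

Definition wE (d : nat) (T : 'I_d -> H -> H) : R :=
  sup [set r : R | exists x : H, hnorm x = 1 /\
         r = Num.sqrt (\sum_(k < d) cmod2 (ip (T k x) x))].

Definition jnorm (d : nat) (T : 'I_d -> H -> H) : R :=
  sup [set r : R | exists x : H, hnorm x = 1 /\
         r = Num.sqrt (\sum_(k < d) hnorm (T k x) ^+ 2)].

Definition ip2 (u v : H * H) : R[i] := ip u.1 v.1 + ip u.2 v.2.
Definition hnorm2 (u : H * H) : R := Num.sqrt (complex.Re (ip2 u u)).

Definition block_op (X Y Z W : H -> H) (u : H * H) : H * H :=
  (X u.1 + Y u.2, Z u.1 + W u.2).

Definition wE2 (d : nat) (T : 'I_d -> H * H -> H * H) : R :=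
  sup [set r : R | exists u : H * H, hnorm2 u = 1 /\
         r = Num.sqrt (\sum_(k < d) cmod2 (ip2 (T k u) u))].
End Ops.

(* numerical radius of a 2x2 complex matrix: sup { |<A v, v>| : ||v|| = 1 },
   with <A v, v> = sum_{i,j} A_ij v_j conj(v_i) *)
Definition mx_numrad (R : realType) (A : 'M[R[i]]_2) : R :=
  sup [set r : R | exists v : 'cV[R[i]]_2,
         \sum_(i < 2) cmod2 (v i ord0) = 1 /\
         r = cmod (\sum_(i < 2) \sum_(j < 2) A i j * v j ord0 * cconj (v i ord0))].

Definition mx2 (R : realType) (a b c e : R) : 'M[R[i]]_2 :=
  \matrix_(i < 2, j < 2)
    (if (i == 0 :> nat) then (if (j == 0 :> nat) then a%:C else b%:C)
     else (if (j == 0 :> nat) then c%:C else e%:C))%C.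

(* Main.v *)
Require Import Defs.
From mathcomp Require Import all_boot all_order all_algebra.
From mathcomp Require Import boolp classical_sets reals.
From mathcomp.real_closed Require Import complex.
From mathcomp Require Import ring lra.
Set Implicit Arguments. Unset Strict Implicit. Unset Printing Implicit Defensive.
Import Order.TTheory GRing.Theory Num.Theory.
Local Open Scope ring_scope.
Local Open Scope complex_scope.

Import ComplexField.Normc.
Section C.
Variable R : rcfType.
Implicit Types z w : R[i].

Lemma cmod2E z : cmod2 z = normc z ^+ 2.
Proof. by case: z => a b; rewrite /cmod2 /= sqr_sqrtr // addr_ge0 // sqr_ge0. Qed.

Lemma cmodE z : cmod z = normc z.
Proof. by case: z. Qed.

Lemma normc_ge0 z : 0 <= normc z.
Proof. by case: z => a b; rewrite /= sqrtr_ge0. Qed.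

Lemma cconjE z : cconj z = conjc z.
Proof. by case: z. Qed.

Lemma normc_conj z : normc (cconj z) = normc z.
Proof. by case: z => a b /=; rewrite sqrrN. Qed.

Lemma normc_real (r : R) : normc (r%:C) = `|r|.
Proof. by rewrite /= expr0n /= addr0 sqrtr_sqr. Qed.

Lemma Re_conj z : complex.Re (cconj z) = complex.Re z.
Proof. by case: z. Qed.

Lemma ReD z w : complex.Re (z + w) = complex.Re z + complex.Re w.
Proof. by case: z; case: w. Qed.

Lemma Re_realM (r : R) z : complex.Re (r%:C * z) = r * complex.Re z.
Proof. by case: z => a b /=; ring. Qed.

Lemma conjM z w : cconj (z * w) = cconj z * cconj w.
Proof. case: z => a b; case: w => c e; rewrite /cconj /=; congr Complex; [by rewrite mulrNN | by rewrite mulrN mulNr opprD addrC]. Qed.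

Lemma conj_conj_mul z : cconj z * z = (normc z ^+ 2)%:C.
Proof.
case: z => a b; rewrite /cconj /= sqr_sqrtr ?addr_ge0 ?sqr_ge0 //.
congr Complex; ring. Qed.

Lemma normc_sum (I : Type) (r : seq I) (P : pred I) (F : I -> R[i]) :
  normc (\sum_(i <- r | P i) F i) <= \sum_(i <- r | P i) normc (F i).
Proof.
elim/big_rec2: _ => [|i y1 y2 _ h]; first by rewrite normc0.
by apply: le_trans (le_normcD _ _) _; rewrite lerD2l.
Qed.
End C.

Section Real.
Variable R : rcfType.

Lemma sqrt_le (a b : R) : a <= b ^+ 2 -> 0 <= b -> Num.sqrt a <= b.
Proof.
move=> h hb; apply: le_trans (ler_wsqrtr h) _.
by rewrite sqrtr_sqr ger0_norm.
Qed.

Lemma quad_le (P S Q : R) : (forall t, 0 <= P + 2 * t * S + t ^+ 2 * Q) -> 0 <= Q ->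
  S ^+ 2 <= P * Q.
Proof.
move=> h hQ; have hP := h 0; rewrite !(mul0r, mulr0, expr0n, addr0) /= in hP.
have [Q0|Qp] := eqVneq Q 0.
  subst Q; rewrite mulr0.
  have [S0|Sn] := eqVneq S 0; first by rewrite S0 expr0n.
  have := h (- (P + 1) / (2 * S)); rewrite mulr0 addr0.
  have -> : 2 * (- (P + 1) / (2 * S)) * S = - (P + 1).
    by field; rewrite Sn.
  lra.
have Qpos : 0 < Q by rewrite lt_def Qp hQ.
have := h (- S / Q).
have -> : P + 2 * (- S / Q) * S + (- S / Q) ^+ 2 * Q = P - S ^+ 2 / Q.
  by field.
rewrite subr_ge0 ler_pdivrMr //.
Qed.

Lemma sum_cs (I : finType) (u v : I -> R) :
  (\sum_i u i * v i) ^+ 2 <= (\sum_i u i ^+ 2) * (\sum_i v i ^+ 2).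
Proof.
rewrite mulrC; apply: quad_le; last by apply: sumr_ge0 => i _; rewrite sqr_ge0.
move=> t.
have -> : (\sum_i v i ^+ 2) + 2 * t * (\sum_i u i * v i) + t ^+ 2 * (\sum_i u i ^+ 2)
   = \sum_i (v i + t * u i) ^+ 2.
  rewrite mulr_sumr mulr_sumr -!big_split /=; apply: eq_bigr => i _; ring.
by apply: sumr_ge0 => i _; rewrite sqr_ge0.
Qed.

Lemma sum_mink (I : finType) (u v : I -> R) :
  Num.sqrt (\sum_i (u i + v i) ^+ 2) <=
  Num.sqrt (\sum_i u i ^+ 2) + Num.sqrt (\sum_i v i ^+ 2).
Proof.
set U := \sum_i u i ^+ 2; set V := \sum_i v i ^+ 2; set S := \sum_i u i * v i.
have hU : 0 <= U by apply: sumr_ge0 => i _; rewrite sqr_ge0.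
have hV : 0 <= V by apply: sumr_ge0 => i _; rewrite sqr_ge0.
apply: sqrt_le; last by rewrite addr_ge0 ?sqrtr_ge0.
have -> : \sum_i (u i + v i) ^+ 2 = U + 2 * S + V.
  rewrite /U /V /S mulr_sumr -!big_split /=; apply: eq_bigr => i _; ring.
have hS : S <= Num.sqrt U * Num.sqrt V.
  rewrite -sqrtrM //; apply: le_trans (ler_norm S) _.
  by rewrite -sqrtr_sqr ler_wsqrtr // sum_cs.
have e1 := sqr_sqrtr hU; have e2 := sqr_sqrtr hV.
have : (Num.sqrt U + Num.sqrt V) ^+ 2 = U + 2 * (Num.sqrt U * Num.sqrt V) + V.
  by rewrite sqrrD e1 e2 mulr_natl.
move=> ->; lra.
Qed.
End Real.

Lemma sq_le (R : rcfType) (a b : R) : 0 <= a -> a <= b -> a ^+ 2 <= b ^+ 2.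
Proof. move=> ha hab; rewrite !expr2; nra. Qed.

Lemma cmink (R : rcfType) (I : finType) (f g : I -> R[i]) :
  Num.sqrt (\sum_k cmod2 (f k + g k)) <=
  Num.sqrt (\sum_k cmod2 (f k)) + Num.sqrt (\sum_k cmod2 (g k)).
Proof.
have e : forall h : I -> R[i], \sum_k cmod2 (h k) = \sum_k normc (h k) ^+ 2.
  by move=> h; apply: eq_bigr => k _; rewrite cmod2E.
rewrite (e f) (e g) (e (fun k => f k + g k)).
apply: le_trans (sum_mink (fun k => normc (f k)) (fun k => normc (g k))).
rewrite ler_wsqrtr // ler_sum // => k _; rewrite sq_le ?normc_ge0 //.
exact: le_normcD.
Qed.

Lemma conjD (R : rcfType) (z w : R[i]) : cconj (z + w) = cconj z + cconj w.
Proof. by case: z => a b; case: w => c e; rewrite /cconj /= opprD. Qed.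

Lemma conj_real (R : rcfType) (r : R) : cconj (r%:C) = r%:C.
Proof. by rewrite /cconj /= oppr0. Qed.

Lemma Im_real (R : rcfType) (r : R) : complex.Re (r%:C) = r.
Proof. by []. Qed.

Section Hil.
Variables (R : realType) (H : lmodType R[i]) (hs : hilbert H).
Local Notation ip := (ip hs).
Local Notation hnorm := (hnorm hs).

Lemma ip0l z : ip 0 z = 0.
Proof.
have := ip_linear hs 1 0 0 z; rewrite scale1r addr0 mul1r => h.
by have := congr1 (fun t => t - ip 0 z) h; rewrite addrK subrr.
Qed.

Lemma ipD x y z : ip (x + y) z = ip x z + ip y z.
Proof. by have := ip_linear hs 1 x y z; rewrite scale1r mul1r. Qed.

Lemma ipZ a x z : ip (a *: x) z = a * ip x z.
Proof. by have := ip_linear hs a x 0 z; rewrite addr0 ip0l addr0. Qed.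

Lemma ipZr a x z : ip x (a *: z) = cconj a * ip x z.
Proof. by rewrite ip_conj ipZ conjM -ip_conj. Qed.

Lemma ipDr x y z : ip x (y + z) = ip x y + ip x z.
Proof. by rewrite ip_conj ipD conjD -!ip_conj. Qed.

Lemma ReipC x y : complex.Re (ip x y) = complex.Re (ip y x).
Proof. by rewrite ip_conj Re_conj. Qed.

Lemma hnorm_ge0 x : 0 <= hnorm x.
Proof. exact: sqrtr_ge0. Qed.

Lemma hnorm_sq x : hnorm x ^+ 2 = complex.Re (ip x x).
Proof. by rewrite sqr_sqrtr // ip_pos. Qed.

Lemma ipZZ (a : R) u v : ip (a%:C *: u) (a%:C *: v) = (a ^+ 2)%:C * ip u v.
Proof. by rewrite ipZ ipZr conj_real mulrA -rmorphM expr2. Qed.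

Lemma re_cs x y :
  complex.Re (ip y x) ^+ 2 <= complex.Re (ip y y) * complex.Re (ip x x).
Proof.
apply: quad_le; last exact: ip_pos.
move=> t; have := ip_pos hs (y + t%:C *: x).
rewrite ipD !ipDr !ipZ !ipZr !conj_real !ReD !Re_realM (ReipC x y).
by move=> h; apply: le_trans h _; rewrite le_eqVlt; apply/orP; left; apply/eqP; ring.
Qed.

Lemma cs x y :
  normc (ip y x) ^+ 2 <= complex.Re (ip y y) * complex.Re (ip x x).
Proof.
set c := ip y x; set n := normc c ^+ 2.
have hn : 0 <= n by rewrite sqr_ge0.
have h := re_cs x (cconj c *: y).
have e1 : ip (cconj c *: y) x = n%:C by rewrite ipZ conj_conj_mul.
have e2 : ip (cconj c *: y) (cconj c *: y) = n%:C * ip y y.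
  by rewrite ipZ ipZr mulrA [cconj c * _]mulrC conj_conj_mul normc_conj.
rewrite e1 e2 Re_realM /= in h.
have [n0|np] := eqVneq n 0.
  by rewrite n0 mulr_ge0 // ip_pos.
have npos : 0 < n by rewrite lt_def np hn.
move: h; rewrite -/n => h; nra.
Qed.
End Hil.

Section Ops2.
Variables (R : realType) (H : lmodType R[i]) (hs : hilbert H).
Local Notation ip := (ip hs).
Local Notation hnorm := (hnorm hs).

Lemma op0 T : bounded_op hs T -> T 0 = 0.
Proof.
case=> lin _; have := lin 1 0 0; rewrite scale1r addr0 => h.
by have := congr1 (fun t => t - T 0) h; rewrite scale1r addrK subrr.
Qed.

Lemma opZ T a x : bounded_op hs T -> T (a *: x) = a *: T x.
Proof. by move=> hT; have := (proj1 hT) a x 0; rewrite (op0 hT) !addr0. Qed.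

Lemma hnormZ (a : R) v : 0 <= a -> hnorm (a%:C *: v) = a * hnorm v.
Proof.
move=> ha; rewrite /Defs.hnorm ipZZ Re_realM sqrtrM ?sqr_ge0 //.
by rewrite sqrtr_sqr ger0_norm.
Qed.

Lemma normalize x : 0 < hnorm x ->
  let e := (hnorm x)^-1%:C *: x in hnorm e = 1 /\ x = (hnorm x)%:C *: e.
Proof.
move=> hp e; split.
  by rewrite /e hnormZ ?invr_ge0 ?ltW // mulVf // gt_eqF.
by rewrite /e scalerA -rmorphM divff ?gt_eqF // scale1r.
Qed.

Lemma hnorm0 x : hnorm x = 0 -> complex.Re (ip x x) = 0.
Proof. by move=> h; rewrite -hnorm_sq h expr0n. Qed.

Lemma sqrt_le0 (s : R) : s <= 0 -> Num.sqrt s = 0.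
Proof. exact: ler0_sqrtr. Qed.

Variable d : nat.

Lemma wE_ub (T : 'I_d -> H -> H) : (forall k, bounded_op hs (T k)) ->
  has_ubound [set r : R | exists x : H, hnorm x = 1 /\
         r = Num.sqrt (\sum_(k < d) cmod2 (ip (T k x) x))].
Proof.
move=> hT; have [M hM] := boolp.choice (fun k => (hT k).2).
exists (Num.sqrt (\sum_(k < d) M k ^+ 2)) => r [x [hx ->]].
rewrite ler_wsqrtr // ler_sum // => k _.
rewrite cmod2E; apply: le_trans (cs hs x (T k x)) _.
rewrite -!hnorm_sq hx expr1n mulr1 sq_le ?hnorm_ge0 //.
by have := hM k x; rewrite hx mulr1.
Qed.

Lemma jn_ub (T : 'I_d -> H -> H) : (forall k, bounded_op hs (T k)) ->
  has_ubound [set r : R | exists x : H, hnorm x = 1 /\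
         r = Num.sqrt (\sum_(k < d) hnorm (T k x) ^+ 2)].
Proof.
move=> hT; have [M hM] := boolp.choice (fun k => (hT k).2).
exists (Num.sqrt (\sum_(k < d) M k ^+ 2)) => r [x [hx ->]].
rewrite ler_wsqrtr // ler_sum // => k _.
rewrite sq_le ?hnorm_ge0 //.
by have := hM k x; rewrite hx mulr1.
Qed.

Lemma wE_bound (T : 'I_d -> H -> H) x : (forall k, bounded_op hs (T k)) ->
  Num.sqrt (\sum_(k < d) cmod2 (ip (T k x) x)) <= wE hs T * hnorm x ^+ 2.
Proof.
move=> hT; have [h0|hp] := eqVneq (hnorm x) 0.
  rewrite h0 expr0n mulr0 /= sqrt_le0 //.
  apply: le_trans (_ : _ <= \sum_(k < d) (0:R)) _; last by rewrite big1_eq.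
  apply: ler_sum => k _; rewrite cmod2E; apply: le_trans (cs hs x (T k x)) _.
  by rewrite (hnorm0 h0) mulr0.
have hpos : 0 < hnorm x by rewrite lt_def hp hnorm_ge0.
have [he ex] := normalize hpos; set e := (_ *: x) in he ex.
set a := hnorm x in hpos ex *.
have -> : \sum_(k < d) cmod2 (ip (T k x) x) =
          (a ^+ 2) ^+ 2 * \sum_(k < d) cmod2 (ip (T k e) e).
  rewrite mulr_sumr; apply: eq_bigr => k _.
  rewrite ex opZ // ipZZ !cmod2E normcM normc_real ger0_norm ?sqr_ge0 //.
  by rewrite exprMn.
rewrite sqrtrM ?sqr_ge0 // sqrtr_sqr ger0_norm ?sqr_ge0 // mulrC.
apply: ler_wpM2r; first by rewrite sqr_ge0.
apply: ub_le_sup; first exact: wE_ub.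
by exists e.
Qed.

Lemma jn_bound (T : 'I_d -> H -> H) x : (forall k, bounded_op hs (T k)) ->
  Num.sqrt (\sum_(k < d) hnorm (T k x) ^+ 2) <= jnorm hs T * hnorm x.
Proof.
move=> hT; have [h0|hp] := eqVneq (hnorm x) 0.
  rewrite h0 mulr0 /= sqrt_le0 //.
  apply: le_trans (_ : _ <= \sum_(k < d) (0:R)) _; last by rewrite big1_eq.
  apply: ler_sum => k _; have [M hM] := (hT k).2.
  have := hM x; rewrite h0 mulr0 => h1.
  have -> : hnorm (T k x) = 0 by apply/eqP; rewrite eq_le h1 hnorm_ge0.
  by rewrite expr0n.
have hpos : 0 < hnorm x by rewrite lt_def hp hnorm_ge0.
have [he ex] := normalize hpos; set e := (_ *: x) in he ex.
set a := hnorm x in hpos ex *.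
have -> : \sum_(k < d) hnorm (T k x) ^+ 2 =
          a ^+ 2 * \sum_(k < d) hnorm (T k e) ^+ 2.
  rewrite mulr_sumr; apply: eq_bigr => k _.
  by rewrite ex opZ // hnormZ ?ltW // exprMn.
rewrite sqrtrM ?sqr_ge0 // sqrtr_sqr (ger0_norm (ltW hpos)) mulrC.
apply: ler_wpM2r; first exact: ltW.
apply: ub_le_sup; first exact: jn_ub.
by exists e.
Qed.

Lemma cross_bound (T : 'I_d -> H -> H) x y : (forall k, bounded_op hs (T k)) ->
  Num.sqrt (\sum_(k < d) cmod2 (ip (T k y) x)) <= hnorm x * (jnorm hs T * hnorm y).
Proof.
move=> hT.
apply: le_trans (_ : Num.sqrt (hnorm x ^+ 2 * \sum_(k < d) hnorm (T k y) ^+ 2) <= _).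
  rewrite ler_wsqrtr // mulr_sumr ler_sum // => k _.
  rewrite cmod2E; apply: le_trans (cs hs x (T k y)) _.
  by rewrite -!hnorm_sq mulrC.
rewrite sqrtrM ?sqr_ge0 // sqrtr_sqr ger0_norm ?hnorm_ge0 //.
by apply: ler_wpM2l; [exact: hnorm_ge0 | exact: jn_bound].
Qed.
End Ops2.

Section Mx.
Variable R : realType.

Lemma numrad_ub (A : 'M[R[i]]_2) (v : 'cV[R[i]]_2) :
  \sum_(i < 2) cmod2 (v i ord0) = 1 ->
  cmod (\sum_(i < 2) \sum_(j < 2) A i j * v j ord0 * cconj (v i ord0)) <= mx_numrad A.
Proof.
move=> hv; apply: ub_le_sup; last by exists v.
exists (\sum_(i < 2) \sum_(j < 2) normc (A i j)) => r [w [hw ->]].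
have w1 : forall i, normc (w i ord0) <= 1.
  move=> i; have : cmod2 (w i ord0) <= 1.
    rewrite -hw (bigD1 i) //= lerDl sumr_ge0 // => j _.
    by rewrite cmod2E sqr_ge0.
  rewrite cmod2E expr2 => h; have h2 := normc_ge0 (w i ord0); nra.
rewrite cmodE; apply: le_trans (normc_sum _ _ _) _.
apply: ler_sum => i _; apply: le_trans (normc_sum _ _ _) _.
apply: ler_sum => j _; rewrite !normcM normc_conj.
have h1 := w1 i; have h2 := w1 j; have h3 := normc_ge0 (A i j).
have h4 := normc_ge0 (w i ord0); have h5 := normc_ge0 (w j ord0).
have h6 : 0 <= normc (A i j) * normc (w j ord0) by rewrite mulr_ge0.
apply: le_trans (_ : _ <= normc (A i j) * normc (w j ord0)) _; nra.
Qed.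

Lemma mx2_val (wx ny nz ww a b : R) :
  let v : 'cV[R[i]]_2 := \col_i (if (i == 0 :> nat) then a%:C else b%:C) in
  \sum_(i < 2) \sum_(j < 2) mx2 wx ny nz ww i j * v j ord0 * cconj (v i ord0)
  = (wx * a ^+ 2 + ny * b * a + nz * a * b + ww * b ^+ 2)%:C.
Proof.
move=> v; rewrite !big_ord_recr !big_ord0 /= !mxE /=.
rewrite !conj_real /= !rmorphD !rmorphM /=; ring.
Qed.
End Mx.

Lemma numrad_val (R : realType) (wx ny nz ww a b : R) : a ^+ 2 + b ^+ 2 = 1 ->
  `|wx * a ^+ 2 + ny * b * a + nz * a * b + ww * b ^+ 2| <= mx_numrad (mx2 wx ny nz ww).
Proof.
move=> hab.
have := numrad_ub (mx2 wx ny nz ww) (v := \col_i (if (i == 0 :> nat) then a%:C else b%:C)).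
rewrite (mx2_val wx ny nz ww a b) cmodE normc_real; apply.
rewrite !big_ord_recr big_ord0 /= !mxE /= /cmod2 /= expr0n /= !addr0 add0r //.
Qed.

Theorem theorem3p2 (R : realType) (H : lmodType R[i]) (hs : hilbert H) (d : nat)
  (X Y Z W : 'I_d -> H -> H)
  (hX : forall k, bounded_op hs (X k)) (hY : forall k, bounded_op hs (Y k))
  (hZ : forall k, bounded_op hs (Z k)) (hW : forall k, bounded_op hs (W k)) :
  wE2 hs (fun k => block_op (X k) (Y k) (Z k) (W k)) <=
  mx_numrad (mx2 (wE hs X) (jnorm hs Y) (jnorm hs Z) (wE hs W)).
Proof.
rewrite /wE2.
have [[u0 hu0]|emp] := pselect (exists u : H * H, hnorm2 hs u = 1); last first.
  rewrite sup_out; last by case=> -[r [u [hu _]]] _; apply: emp; exists u.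
  apply: le_trans (numrad_val _ _ _ _ (a := 1) (b := 0) _); first exact: normr_ge0.
  by rewrite expr1n expr0n addr0.
apply: ge_sup; first by eexists; exists u0; split.
move=> r [[x1 x2] [hu ->]].
have -> : \sum_(k < d) cmod2 (ip2 hs (block_op (X k) (Y k) (Z k) (W k) (x1, x2)) (x1, x2))
  = \sum_(k < d) cmod2 ((ip hs (X k x1) x1 + ip hs (Y k x2) x1) +
                         (ip hs (Z k x1) x2 + ip hs (W k x2) x2)).
  by apply: eq_bigr => k _; rewrite /ip2 /block_op /= !ipD.
apply: le_trans (cmink _ _) _.
apply: le_trans (lerD (cmink _ _) (cmink _ _)) _.
apply: le_trans (lerD (lerD (wE_bound x1 hX) (cross_bound x1 x2 hY))
                      (lerD (cross_bound x2 x1 hZ) (wE_bound x2 hW))) _.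
have hab : hnorm hs x1 ^+ 2 + hnorm hs x2 ^+ 2 = 1.
  rewrite !hnorm_sq -ReD.
  move: hu; rewrite /hnorm2 /ip2 /= => hu.
  by rewrite -(sqr_sqrtr (_ : 0 <= complex.Re (ip hs x1 x1 + ip hs x2 x2))) ?hu ?expr1n // ReD addr_ge0 // ip_pos.
apply: le_trans (numrad_val _ _ _ _ hab).
apply: le_trans (ler_norm _); rewrite le_eqVlt; apply/orP; left; apply/eqP; ring.
Qed.
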